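(* Let $G$ be a finite group, $K\unlhd H\le G$ with $H/K$ cyclic, $A\unlhd H$, and $D=K\cap A$. Then $\varepsilon(A,D)=\varepsilon(H,K)+e$ for some central idempotent $e$ of $\mathbb{Q}H$ orthogonal to $\varepsilon(H,K)$.
   Context: For $K\unlhd H$: $\widehat{H}=\frac1{|H|}\sum_{h\in H}h$; $\varepsilon(H,K)=\widehat K$ if $H=K$, and otherwise $\varepsilon(H,K)=\prod(\widehat K-\widehat L)$, the product over all $L\unlhd H$ with $K\subsetneq L$ and $L/K$ a minimal normal subgroup of $H/K$. *)

(* Defs.v *)
From mathcomp Require Import all_boot all_order all_algebra all_fingroup all_solvable.
Set Implicit Arguments. Unset Strict Implicit. Unset Printing Implicit Defensive.
Import GRing.Theory.
Local Open Scope ring_scope.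

(* The rational group algebra Q[gT] of a finite group type gT, represented as
   finitely supported functions gT -> rat (all functions, gT being finite).
   Addition/subtraction/zero are the pointwise ones of {ffun gT -> rat};
   multiplication is convolution. For a subgroup H, QH is the subalgebra of
   functions supported in H. *)
Section GroupAlgebra.
Variable gT : finGroupType.

Definition galg := {ffun gT -> rat}.

Definition gaMul (f g : galg) : galg :=
  [ffun x => \sum_(y : gT) f y * g ((y^-1) * x)%g].

Definition gaOne : galg := [ffun x => if x == 1%g then 1 else 0].

Definition hat (H : {set gT}) : galg :=
  [ffun x => if x \in H then (#|H|%:R)^-1 else 0].

Definition eps (H K : {set gT}) : galg :=
  if H == K then hat K
  else \big[gaMul/gaOne]_(L : {group gT} |
          [&& (L <| H)%g, K \proper L & minnormal (L / K)%g (H / K)%g])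
          (hat K - hat L).

Definition in_galg (H : {set gT}) (f : galg) : Prop :=
  forall x, x \notin H -> f x = 0.

Definition central_idem (H : {set gT}) (e : galg) : Prop :=
  [/\ in_galg H e,
      forall a, in_galg H a -> gaMul a e = gaMul e a
    & gaMul e e = e].

End GroupAlgebra.

(* Main.v *)
Require Import Defs.
From mathcomp Require Import all_boot all_order all_algebra all_fingroup all_solvable.
Set Implicit Arguments. Unset Strict Implicit. Unset Printing Implicit Defensive.
Import GRing.Theory.
Local Open Scope ring_scope.

Section A.
Variable gT : finGroupType.
Implicit Types f g h a : galg gT.

Lemma gaMulA f g h : gaMul (gaMul f g) h = gaMul f (gaMul g h).
Proof.
apply/ffunP=> x; rewrite !ffunE.
under eq_bigr do rewrite ffunE big_distrl /=.
rewrite exchange_big /=. apply: eq_bigr => z _. rewrite ffunE big_distrr /=.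
rewrite (reindex_inj (mulgI z)) /=. apply: eq_bigr => w _.
by rewrite mulKg invMg -mulgA mulrA.
Qed.

Lemma gaMulBl f g h : gaMul (f - g) h = gaMul f h - gaMul g h.
Proof.
apply/ffunP=> x; rewrite !ffunE -sumrB; apply: eq_bigr => y _.
by rewrite !ffunE mulrBl.
Qed.

Lemma gaMulBr f g h : gaMul h (f - g) = gaMul h f - gaMul h g.
Proof.
apply/ffunP=> x; rewrite !ffunE -sumrB; apply: eq_bigr => y _.
by rewrite !ffunE mulrBr.
Qed.

Lemma gaMul0r f : gaMul 0 f = 0.
Proof. by apply/ffunP=> x; rewrite !ffunE big1 // => y _; rewrite ffunE mul0r. Qed.

Lemma gaMulr0 f : gaMul f 0 = 0.
Proof. by apply/ffunP=> x; rewrite !ffunE big1 // => y _; rewrite ffunE mulr0. Qed.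

Lemma gaMul1r f : gaMul (gaOne gT) f = f.
Proof.
apply/ffunP=> x; rewrite ffunE (bigD1 1%g) //= big1 ?addr0.
  by rewrite ffunE eqxx mul1r invg1 mul1g.
by move=> y /negbTE ny; rewrite ffunE ny mul0r.
Qed.

Lemma gaMulr1 f : gaMul f (gaOne gT) = f.
Proof.
apply/ffunP=> x; rewrite ffunE (bigD1 x) //= big1 ?addr0.
  by rewrite ffunE mulVg eqxx mulr1.
move=> y ny; rewrite ffunE.
case: eqP => [e|]; last by rewrite mulr0.
by case/eqP: ny; apply: (mulgI y^-1%g); rewrite e mulVg.
Qed.

Lemma hatM (N M : {group gT}) : gaMul (hat N) (hat M) =
  [ffun x => if x \in (N * M)%g then ((#|N| * #|M|)%:R)^-1 * #|N :&: M|%:R else 0].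
Proof.
apply/ffunP=> x; rewrite !ffunE.
transitivity (\sum_(y in N :&: (x *: M)%g) ((#|N| * #|M|)%:R)^-1 : rat).
  rewrite [RHS]big_mkcond /=; apply: eq_bigr => y _; rewrite !ffunE in_setI.
  case: (y \in N); last by rewrite mul0r.
  have -> : (y \in (x *: M)%g) = (y^-1 * x \in M)%g.
    by rewrite mem_lcoset -groupV invMg invgK.
  by case: (_ \in M); rewrite ?mulr0 // natrM invfM mulrC.
rewrite sumr_const.
case: ifP => [/mulsgP[n m nN mM ->] | nNM].
  have -> : (N :&: (n * m) *: M = n *: (N :&: M))%g.
    apply/setP=> y; rewrite inE !mem_lcoset inE invMg -mulgA.
    rewrite (groupMl _ (groupVr mM)) (groupMl _ (groupVr nN)).
    by case: (y \in N); rewrite ?andbF.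

  by rewrite card_lcoset mulr_natr.
rewrite (_ : N :&: (x *: M)%g = set0) ?cards0 ?mulr0n //.
apply/setP=> y; rewrite !inE mem_lcoset; apply/negbTE/negP=> /andP[yN ym].
move/negbT: nNM; apply/negP.
have -> : x = (y * (x^-1 * y)^-1)%g by rewrite invMg invgK mulKVg.
by rewrite negbK; apply: mem_mulg; rewrite ?groupV.
Qed.


Lemma hatMG (N M G : {group gT}) : (N * M)%g = G :> {set gT} ->
  gaMul (hat N) (hat M) = hat G.
Proof.
move=> eG; rewrite hatM; apply/ffunP=> x; rewrite !ffunE eG.
case: (x \in G) => //.
have := mul_cardG N M; rewrite eG => e.
rewrite e natrM invfM -mulrA mulVf ?mulr1 //.
by rewrite Num.Theory.pnatr_eq0 -lt0n cardG_gt0.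
Qed.

Lemma hat_subl (N M : {group gT}) : N \subset M -> gaMul (hat N) (hat M) = hat M.
Proof. by move=> s; apply: hatMG; rewrite mulSGid. Qed.

Lemma hat_subr (N M : {group gT}) : M \subset N -> gaMul (hat N) (hat M) = hat N.
Proof. by move=> s; apply: hatMG; rewrite mulGSid. Qed.

Lemma hat_id (N : {group gT}) : gaMul (hat N) (hat N) = hat N.
Proof. exact: hat_subl. Qed.

Variable H : {group gT}.

Lemma in_galgM f g : in_galg H f -> in_galg H g -> in_galg H (gaMul f g).
Proof.
move=> hf hg x xH; rewrite ffunE big1 // => y _.
case yH: (y \in H); last by rewrite hf ?yH ?mul0r.
by rewrite hg ?mulr0 // groupMl ?groupV.
Qed.

Lemma in_galgB f g : in_galg H f -> in_galg H g -> in_galg H (f - g).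
Proof. by move=> hf hg x xH; rewrite !ffunE hf // hg // subrr. Qed.

Lemma in_galg1 : in_galg H (gaOne gT).
Proof. by move=> x xH; rewrite ffunE; case: eqP => // e; rewrite e group1 in xH. Qed.

Lemma in_galg_hat (N : {group gT}) : N \subset H -> in_galg H (hat N).
Proof.
move=> sNH x xH; rewrite ffunE; case: ifP => // xN.
by case/negP: xH; apply: (subsetP sNH).
Qed.

Definition cen f := in_galg H f /\ forall a, in_galg H a -> gaMul a f = gaMul f a.

Lemma cenM f g : cen f -> cen g -> cen (gaMul f g).
Proof.
move=> [hf cf] [hg cg]; split; first exact: in_galgM.
move=> a ha; rewrite -gaMulA cf // !gaMulA cg //.
Qed.

Lemma cenB f g : cen f -> cen g -> cen (f - g).
Proof.
move=> [hf cf] [hg cg]; split; first exact: in_galgB.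
by move=> a ha; rewrite gaMulBl gaMulBr cf // cg.
Qed.

Lemma cen1 : cen (gaOne gT).
Proof. by split; [exact: in_galg1 | move=> a _; rewrite gaMul1r gaMulr1]. Qed.

Lemma cen_hat (N : {group gT}) : (N <| H)%g -> cen (hat N).
Proof.
case/andP=> sNH nNH; split; first exact: in_galg_hat.
move=> a ha; apply/ffunP=> x; rewrite !ffunE.
rewrite (reindex_inj (inj_comp (mulIg x) invg_inj)) /=.
apply: eq_bigr => z _; rewrite !ffunE mulrC.
case zH: ((z^-1 * x)%g \in H); last by rewrite ha ?zH ?mulr0 ?mul0r.
congr (_ * _); rewrite -(memJ_norm z (subsetP nNH _ zH)).
by rewrite conjgE invMg !invgK !mulgA mulgK.
Qed.


Section Big.
Variables (I : eqType) (P : pred I) (F : I -> galg gT).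
Notation Pr r := (\big[@gaMul gT/gaOne gT]_(i <- r | P i) F i).

Lemma cen_big r : (forall i, P i -> cen (F i)) -> cen (Pr r).
Proof. by move=> h; apply: big_ind => //; [exact: cen1 | exact: cenM]. Qed.

Lemma idem_big r : (forall i, P i -> cen (F i) /\ gaMul (F i) (F i) = F i) ->
  gaMul (Pr r) (Pr r) = Pr r.
Proof.
move=> h.
suff [] : cen (Pr r) /\ gaMul (Pr r) (Pr r) = Pr r by [].
apply: (big_ind (fun f => cen f /\ gaMul f f = f)) => //; first by split; [exact: cen1 | exact: gaMul1r].
move=> f g [cf ff] [cg gg]; split; first exact: cenM.
rewrite !gaMulA -[gaMul g (gaMul f g)]gaMulA -cg.2; last exact: cf.1.
by rewrite !gaMulA gg -gaMulA ff.
Qed.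

Lemma absorbl r x : (forall i, P i -> gaMul x (F i) = F i) -> has P r ->
  gaMul x (Pr r) = Pr r.
Proof.
move=> h; elim: r => // i r IH /=; rewrite big_cons.
case Pi: (P i) => /=; last exact: IH.
by rewrite -gaMulA h.
Qed.

Lemma absorbr r y : (forall i, P i -> gaMul y (F i) = y) -> gaMul y (Pr r) = y.
Proof.
move=> h; apply: (big_ind (fun f => gaMul y f = y)) => //.
  exact: gaMulr1.
by move=> f g e1 e2; rewrite -gaMulA e1 e2.
Qed.

Lemma zero_big r x : (forall i, P i -> cen (F i)) -> cen x ->
  (exists i, [/\ i \in r, P i & gaMul (F i) x = 0]) -> gaMul (Pr r) x = 0.
Proof.
move=> h cx; elim: r => [[i []]//|j r IH] [i [ir Pi e]].
rewrite big_cons; case Pj: (P j); last first.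
  apply: IH; exists i; split=> //; move: ir; rewrite inE.
  by case/orP=> // /eqP eij; rewrite -eij Pi in Pj.
rewrite gaMulA; move: ir; rewrite inE => /orP[/eqP eij|ir].
  subst j; rewrite -(cen_big r h).2; last exact: cx.1.
  by rewrite -gaMulA e gaMul0r.
by rewrite IH ?gaMulr0 //; exists i.
Qed.

End Big.

End A.
Section G.
Variable rT : finGroupType.
Local Open Scope nat_scope.
Local Open Scope group_scope.

Lemma minnormal_prime (X Y : {group rT}) : prime #|X| -> Y \subset 'N(X) ->
  minnormal X Y.
Proof.
move=> pX nXY; apply/mingroupP; split.
  by rewrite -cardG_gt1 prime_gt1 // nXY.
move=> Z /andP[ntZ _] sZX; apply/eqP; rewrite eqEcard sZX /=.
case/primeP: pX => _ h; case/orP: (h _ (cardSg sZX)).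
  by move/eqP=> e; rewrite -cardG_gt1 e in ntZ.
by move/eqP=> ->.
Qed.

Lemma minnormal_ab_prime (X Y : {group rT}) : abelian Y -> X \subset Y ->
  minnormal X Y -> prime #|X|.
Proof.
move=> aY sXY /mingroupP[/andP[ntX nXY] minX].
have gt1 : 1 < #|X| by rewrite cardG_gt1.
have [x xX ox] := Cauchy (pdiv_prime gt1) (pdiv_dvd _).
have sxX : <[x]> \subset X by rewrite cycle_subG.
have gPx : (<[x]> != 1 :> {set rT}) && (Y \subset 'N(<[x]>)).
  apply/andP; split.
    by rewrite -cardG_gt1 /= -orderE ox prime_gt1 // pdiv_prime.
  by apply: sub_abelian_norm => //; apply: subset_trans sXY.
have e := minX _ gPx sxX.
by rewrite -e /= -orderE ox pdiv_prime.
Qed.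

End G.

Section G2.
Variables (gT : finGroupType) (H K A : {group gT}).
Local Open Scope nat_scope.
Local Open Scope group_scope.
Hypotheses (nKH : K <| H) (cHK : cyclic (H / K)) (nAH : A <| H).

Lemma gt1 : H :!=: K -> exists L : {group gT},
  [&& L <| H, K \proper L & minnormal (L / K) (H / K)].
Proof.
move=> neHK.
have sKH := normal_sub nKH; have nKH' := normal_norm nKH.
have ntQ : H / K != 1.
  apply: contra neHK => /eqP e; rewrite eqEsubset sKH andbT.
  by rewrite -(quotient_sub1 nKH') e.
have [M minM sMQ] := minnormal_exists ntQ (normG (H / K)).
exists (coset K @*^-1 M)%G; rewrite /= cosetpreK minM andbT.
have nMQ : M <| H / K.
  by case/mingroupP: minM => /andP[_ nM] _; rewrite /normal sMQ.
apply/andP; split.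
  by rewrite -(quotientGK nKH) cosetpre_normal.
rewrite properEneq sub_cosetpre andbT.
apply: contraTneq isT => e.
case/mingroupP: minM => /andP[ntM _] _.
by rewrite -(cosetpreK M) -e trivg_quotient eqxx in ntM.
Qed.

Variable M : {group gT}.
Hypotheses (nMA : M <| A) (pDM : (K :&: A) \proper M)
  (mMA : minnormal (M / (K :&: A)) (A / (K :&: A))).

Lemma sMA : M \subset A. Proof. exact: normal_sub nMA. Qed.
Lemma sDM : K :&: A \subset M. Proof. exact: proper_sub pDM. Qed.
Lemma nKM : M \subset 'N(K).
Proof.
apply: subset_trans (normal_norm nKH).
exact: subset_trans sMA (normal_sub nAH).
Qed.

Lemma KMeq : K <*> M = K * M. Proof. exact: norm_joinEr nKM. Qed.

Lemma KcapM : K :&: M = K :&: A.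
Proof.
apply/eqP; rewrite eqEsubset setIS ?sMA //=.
by rewrite subsetI subsetIl sDM.
Qed.

Lemma primeM : prime #|M / K|.
Proof.
have e1 : #|M / K| = #|M / (K :&: A)|.
  by rewrite -KcapM; apply/esym/card_isog/second_isog/nKM.
rewrite e1; apply: (@minnormal_ab_prime _ _ _ _ _ mMA).
  have : cyclic (A / (K :&: A)).
    rewrite (isog_cyclic (second_isog _)); last first.
      exact: subset_trans (normal_sub nAH) (normal_norm nKH).
    by apply: cyclicS cHK; apply: quotientS; exact: normal_sub nAH.
  by rewrite setIC; apply: cyclic_abelian.
exact: quotientS sMA.
Qed.

Lemma sLH : K <*> M \subset H.
Proof.
by rewrite join_subG (normal_sub nKH) (subset_trans sMA (normal_sub nAH)).
Qed.

Lemma LK : (K <*> M) / K = M / K.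
Proof. by rewrite KMeq quotientMidl. Qed.

Lemma minL : minnormal ((K <*> M) / K) (H / K).
Proof.
rewrite LK; apply: minnormal_prime; first exact: primeM.
apply: sub_abelian_norm; first exact: cyclic_abelian.
by apply: quotientS; exact: subset_trans sMA (normal_sub nAH).
Qed.

Lemma nLH : K <*> M <| H.
Proof.
have nKL : K <| K <*> M.
  by rewrite /normal joing_subl (subset_trans sLH (normal_norm nKH)).
rewrite -(quotientGK nKL) -(quotientGK nKH) cosetpre_normal.
rewrite /normal quotientS ?sLH //=.
apply: sub_abelian_norm; first exact: cyclic_abelian.
exact: quotientS sLH.
Qed.

Lemma pKL : K \proper K <*> M.
Proof.
rewrite properEneq joing_subl andbT.
apply: contraTneq isT => e.
have := prime_gt1 primeM; rewrite -LK -e trivg_quotient cards1.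
by [].
Qed.

Lemma nMH : M <| H.
Proof.
have -> : gval M = (K <*> M) :&: A.
  rewrite KMeq -(normC nKM) -group_modl ?sMA //.
  by rewrite mulGSid // sDM.
exact: normalI nLH nAH.
Qed.

End G2.


Theorem lemma6 (gT : finGroupType) (G H K A : {group gT}) :
  H \subset G -> (K <| H)%g -> cyclic (H / K)%g -> (A <| H)%g ->
  exists e : galg gT,
    [/\ central_idem H e,
        gaMul e (eps H K) = 0,
        gaMul (eps H K) e = 0
      & eps A (K :&: A)%g = eps H K + e].
Proof.
move=> _ nKH cHK nAH.
have sKH := normal_sub nKH; have sAH := normal_sub nAH.
have nDH : ((K :&: A)%G <| H)%g by exact: normalI.
have idemB : forall N M : {group gT}, (N \subset M)%g ->
    gaMul (hat N - hat M) (hat N - hat M) = hat N - hat M.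
  move=> N M s; rewrite gaMulBl !gaMulBr hat_id hat_subl // hat_subr // hat_id.
  by rewrite subrr subr0.
have [cH iH] : cen H (eps H K) /\ gaMul (eps H K) (eps H K) = eps H K.
  rewrite /eps; case: eqP => [_|_].
    by split; [apply: cen_hat | apply: hat_id].
  split.
    apply: cen_big => L /andP[nLH _].
    by apply: cenB; apply: cen_hat.
  apply: (idem_big (H := H)) => L /andP[nLH /andP[pKL _]]; split.
    by apply: cenB; apply: cen_hat.
  exact: idemB (proper_sub pKL).
have [cA iA] : cen H (eps A (K :&: A)%g) /\
    gaMul (eps A (K :&: A)%g) (eps A (K :&: A)%g) = eps A (K :&: A)%g.
  rewrite /eps; case: eqP => [_|_].
    by split; [apply: (cen_hat nDH) | apply: (hat_id (K :&: A)%G)].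
  split.
    apply: cen_big => M /andP[nMA /andP[pDM _]].
    by apply: cenB; [apply: (cen_hat nDH) | apply: cen_hat; exact: (nMH nKH cHK nAH nMA pDM)].
  apply: (idem_big (H := H)) => M /andP[nMA /andP[pDM _]]; split.
    by apply: cenB; [apply: (cen_hat nDH) | apply: cen_hat; exact: (nMH nKH cHK nAH nMA pDM)].
  exact: (idemB (K :&: A)%G M (proper_sub pDM)).
have F3 : gaMul (eps H K) (hat K) = eps H K.
  rewrite (cen_hat nKH).2; last exact: cH.1.
  rewrite /eps; case: eqP => [_|/eqP neHK]; first exact: hat_id.
  apply: absorbl => [L /andP[_ /andP[pKL _]]|].
    by rewrite gaMulBr hat_id hat_subl // proper_sub.
  have [L PL] := gt1 nKH neHK.
  by apply/hasP; exists L => //; exact: mem_index_enum.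
have F4 : gaMul (eps H K) (eps A (K :&: A)%g) = eps H K.
  have [eHK|neHK] := eqVneq (gval H) (gval K).
    have eA : A :==: (K :&: A)%g.
      by rewrite eq_sym; apply/eqP/setIidPr; rewrite -eHK.
    rewrite [eps A _]/eps eA -{2}F3 -{1}F3 gaMulA.
    by rewrite (hat_subr (N := K) (M := (K :&: A)%G)) // subsetIl.
  rewrite [eps A _]/eps; case: eqP => [_|_].
    rewrite -{1}F3 gaMulA.
    by rewrite (hat_subr (N := K) (M := (K :&: A)%G)) // subsetIl.
  apply: absorbr => M /andP[nMA /andP[pDM mMA]].
  rewrite -{1}F3 gaMulA gaMulBr.
  rewrite (hat_subr (N := K) (M := (K :&: A)%G)) ?subsetIl //.
  rewrite (hatMG (G := (K <*> M)%G)) /=; last by rewrite (KMeq nKH nAH nMA).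
  rewrite gaMulBr F3.
  have -> : gaMul (eps H K) (hat (K <*> M)%G) = 0.
    rewrite /eps (negbTE neHK); apply: (zero_big (H := H)).
    - by move=> L /andP[nLH _]; apply: cenB; apply: cen_hat.
    - by apply: cen_hat; exact: (nLH nKH cHK nAH nMA).
    exists (K <*> M)%G; split.
    - exact: mem_index_enum.
    - by rewrite (nLH nKH cHK nAH nMA) (pKL nKH cHK nAH nMA pDM mMA) (minL nKH cHK nAH nMA pDM mMA).
    by rewrite gaMulBl hat_id hat_subl ?joing_subl // subrr.
  by rewrite subr0.
have F4' : gaMul (eps A (K :&: A)%g) (eps H K) = eps H K.
  by rewrite -cA.2 ?F4 //; exact: cH.1.
exists (eps A (K :&: A)%g - eps H K); split.
- split; first exact: (cenB cA cH).1.
    exact: (cenB cA cH).2.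
  rewrite gaMulBl !gaMulBr iA iH F4 F4'.
  by rewrite subrr subr0.
- by rewrite gaMulBl F4' iH subrr.
- by rewrite gaMulBr F4 iH subrr.
by rewrite addrC subrK.
Qed.
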